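(* There is an absolute constant $c>0$ such that the following holds. Let $G$ be a finite Abelian group, $p\ge2$ an even integer, $S\subseteq G$, $\{f_g\}_{g\in S}$ real-valued functions on $G$, $B\subseteq G$ a regular Bohr set, and $B',B''\subseteq B_\tau$ regular Bohr sets with $\tau\le c/\mathrm{rk}(B)$. Then \[ \Big\|\sum_{g\in S}f_g\circ f_g\Big\|_{p(\mu_{B'}\circ\mu_{B'}*\mu_{B''}\circ\mu_{B''})}\ge\frac12\Big\|\sum_{g\in S}f_g\circ f_g^{g}\Big\|_{p(\mu_B)}, \] where $f^g(x)=f(x-g)$.
   Context: Averages normalized over $G$: $(f\circ g)(x)=\mathbb{E}_yf(y)g(x+y)$, $(f*g)(x)=\mathbb{E}_yf(y)g(x-y)$; $\mu_X=\frac{|G|}{|X|}1_X$; for $\nu\ge0$, $\|f\|_{p(\nu)}=(\mathbb{E}_x\nu(x)|f(x)|^p)^{1/p}$. Bohr set: for nonempty $\Gamma\subseteq\widehat G$, $\phi\in[0,2]$, $\mathrm{Bohr}(\Gamma,\phi)=\{x:|1-\gamma(x)|\le\phi\ \forall\gamma\in\Gamma\}$, rank $|\Gamma|$; dilate $B_\rho=\mathrm{Bohr}(\Gamma,\rho\phi)$. $B$ of rank $r$ is regular if for all $0\le\kappa\le1/(100r)$: $|B_{1+\kappa}|\le(1+100\kappa r)|B|$ and $|B_{1-\kappa}|\ge(1-100\kappa r)|B|$. *)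

(* Defs.v *)
From HB Require Import structures.
From mathcomp Require Import all_boot all_order all_algebra.
From mathcomp Require Import complex.
From mathcomp Require Import reals exp.
Set Implicit Arguments. Unset Strict Implicit. Unset Printing Implicit Defensive.
Import Order.TTheory GRing.Theory Num.Theory.
Local Open Scope ring_scope.
Local Open Scope complex_scope.

Section FourierDefs.
Variable R : realType.
Variable G : finZmodType.

Definition Ex (f : G -> R) : R := (#|G|%:R)^-1 * \sum_(x : G) f x.

Definition corr (f g : G -> R) : G -> R := fun x => Ex (fun y => f y * g (x + y)).
Definition conv (f g : G -> R) : G -> R := fun x => Ex (fun y => f y * g (x - y)).

Definition mu (X : {set G}) : G -> R :=
  fun x => (#|G|%:R / #|X|%:R) * (x \in X)%:R.

Definition lpnorm (p : nat) (nu f : G -> R) : R :=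
  (Ex (fun x => nu x * `|f x| ^+ p)) `^ (p%:R^-1).

Definition shift (f : G -> R) (g : G) : G -> R := fun x => f (x - g).

Definition is_char (gam : {ffun G -> R[i]}) : Prop :=
  forall x y : G, gam (x + y) = gam x * gam y /\ gam x != 0.

Definition bohr_data (Gam : seq {ffun G -> R[i]}) (phi : R) : Prop :=
  [/\ Gam != [::], uniq Gam, (forall gam, gam \in Gam -> is_char gam)
    & 0 <= phi <= 2].

(* Bohr(Gamma, phi) = {x : |1 - gam(x)| <= phi for all gam in Gamma};
   the dilate B_rho is bohr Gam (rho * phi). *)
Definition bohr (Gam : seq {ffun G -> R[i]}) (phi : R) : {set G} :=
  [set x | all (fun gam : {ffun G -> R[i]} => `|1 - gam x| <= phi%:C) Gam].

Definition rk (Gam : seq {ffun G -> R[i]}) : nat := size Gam.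

Definition regular (Gam : seq {ffun G -> R[i]}) (phi : R) : Prop :=
  let r := (rk Gam)%:R in
  forall kappa : R, 0 <= kappa -> kappa <= (100 * r)^-1 ->
    (#|bohr Gam ((1 + kappa) * phi)|%:R <= (1 + 100 * kappa * r) * #|bohr Gam phi|%:R)
    /\ (#|bohr Gam ((1 - kappa) * phi)|%:R >= (1 - 100 * kappa * r) * #|bohr Gam phi|%:R).

End FourierDefs.
Arguments mu {R G} X x.
Arguments lpnorm {R G} p nu f.

(* Main.v *)
Require Import Defs.
From HB Require Import structures.
From mathcomp Require Import all_boot all_order all_algebra.
From mathcomp Require Import complex.
From mathcomp Require Import reals exp.
From mathcomp Require fingroup cyclic finalg.
From mathcomp Require Import ring lra.
Import Order.TTheory GRing.Theory Num.Theory.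
Local Open Scope ring_scope.
Local Open Scope complex_scope.
Set Implicit Arguments. Unset Strict Implicit. Unset Printing Implicit Defensive.

Module Aux.
Import fingroup cyclic finalg.
Lemma mulrn_card (G : finZmodType) (x : G) : x *+ #|G| = 0.
Proof.
have := @expg_cardG _ [set: G]%G x (in_setT x).
by rewrite cardsT -FinRing.zmodXgE.
Qed.
End Aux.

Section Chars.
Variable R : realType.
Variable G : finZmodType.
Implicit Types (gam : {ffun G -> R[i]}) (Gam : seq {ffun G -> R[i]}).

Lemma char0 gam : is_char gam -> gam 0 = 1.
Proof.
move=> h; have [e nz] := h 0 0; rewrite addr0 in e.
by apply: (mulfI nz); rewrite -e mulr1.
Qed.

Lemma charMn gam x n : is_char gam -> gam (x *+ n) = gam x ^+ n.
Proof.
move=> h; elim: n => [|n IH]; first by rewrite mulr0n expr0 char0.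
by rewrite mulrS exprS (h x (x *+ n)).1 IH.
Qed.

Lemma char_norm gam x : is_char gam -> `|gam x| = 1.
Proof.
move=> h; apply/eqP; rewrite -(@pexpr_eq1 _ _ #|G|) ?normr_ge0 //; last first.
  by apply/card_gt0P; exists 0.
by rewrite -normrX -charMn // Aux.mulrn_card char0 // normr1.
Qed.

Lemma charN gam x : is_char gam -> gam (- x) * gam x = 1.
Proof. by move=> h; rewrite -(h _ _).1 addNr char0. Qed.

Lemma char_tri gam x y : is_char gam ->
  `|1 - gam (x + y)| <= `|1 - gam x| + `|1 - gam y|.
Proof.
move=> h; rewrite (h x y).1.
have -> : 1 - gam x * gam y = (1 - gam x) + gam x * (1 - gam y).
  by rewrite mulrBr mulr1 addrA subrK.
by apply: (le_trans (ler_normD _ _)); rewrite normrM char_norm // mul1r.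
Qed.

Lemma char_opp gam x : is_char gam -> `|1 - gam (- x)| = `|1 - gam x|.
Proof.
move=> h; have e := charN x h.
have -> : 1 - gam (- x) = gam (- x) * (gam x - 1).
  by rewrite mulrBr e mulr1.
by rewrite normrM char_norm // mul1r -normrN opprB.
Qed.

Definition chars (Gam : seq {ffun G -> R[i]}) := forall gam, gam \in Gam -> is_char gam.

Lemma bohr_add Gam a b x y : chars Gam -> x \in bohr Gam a -> y \in bohr Gam b ->
  x + y \in bohr Gam (a + b).
Proof.
move=> hc; rewrite !inE => /allP hx /allP hy; apply/allP => gam gin.
apply: (le_trans (char_tri _ _ (hc _ gin))).
by rewrite rmorphD; apply: lerD; [exact: hx | exact: hy].
Qed.

Lemma bohr_opp Gam a x : chars Gam -> x \in bohr Gam a -> - x \in bohr Gam a.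
Proof.
move=> hc; rewrite !inE => /allP hx; apply/allP => gam gin.
rewrite char_opp; [exact: hx | exact: hc].
Qed.

Lemma bohr0 Gam a : chars Gam -> 0 <= a -> 0 \in bohr Gam a.
Proof.
move=> hc a0; rewrite inE; apply/allP => gam gin.
by rewrite (char0 (hc _ gin)) subrr normr0 lecR.
Qed.

Lemma bohr0_ge0 Gam a : Gam != [::] -> 0 \in bohr Gam a -> 0 <= a.
Proof.
case: Gam => [//|gam Gam] _; rewrite inE /= => /andP [h _].
by rewrite -lecR rmorph0 (le_trans (normr_ge0 _) h).
Qed.

End Chars.

Section Core.
Variable R : realType.
Variable G : finZmodType.
Variable p : nat.
Local Notation H := {ffun 'I_p -> G}.

Definition addH (a b : H) : H := [ffun i => a i + b i].
Definition dH (u : G) : H := [ffun=> u].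
Definition corrH (P Q : H -> R) (s : H) : R := \sum_(z : H) P z * Q (addH s z).
Definition psd (k : H -> R) := exists c (P : H -> R), 0 <= c /\ forall s, k s = c * corrH P P s.

Lemma addH_inj s : injective (addH s).
Proof.
move=> a b /ffunP e; apply/ffunP => i; have := e i; rewrite !ffunE; exact: addrI.
Qed.

Lemma addH_injr s : injective (addH^~ s).
Proof.
move=> a b /ffunP e; apply/ffunP => i; have := e i; rewrite !ffunE; exact: addIr.
Qed.

Lemma addH0 z : addH (dH 0) z = z.
Proof. by apply/ffunP => i; rewrite !ffunE add0r. Qed.

Lemma psd_le k s : psd k -> k s <= k (dH 0).
Proof.
case=> c [P [c0 e]]; rewrite !e; apply: (ler_wpM2l c0).
rewrite /corrH.
under [X in _ <= X]eq_bigr => z _ do rewrite addH0.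
apply: (@le_trans _ _ ((\sum_z (P z ^+ 2 + P (addH s z) ^+ 2)) / 2)).
  rewrite mulr_suml; apply: ler_sum => z _.
  rewrite ler_pdivlMr // mulrC.
  have := sqr_ge0 (P z - P (addH s z)); nra.
rewrite big_split /=.
rewrite -(@reindex_inj _ _ _ _ _ xpredT (fun z => P z ^+ 2) (@addH_inj s)) /=.
have -> : \sum_z P z * P z = \sum_z P z ^+ 2 by apply: eq_bigr => z _; rewrite expr2.
lra.
Show.
Qed.
End Core.
Arguments dH {G p} u.

Section Stage.
Variable R : realType.
Variable G : finZmodType.
Variable p : nat.
Local Notation H := {ffun 'I_p -> G}.

Lemma argeq (e w s y : G) : (e - w + s) + (y + w) = (s + y) + e.
Proof. by rewrite [y + w]addrC addrA [e - w + s + w]addrAC subrK -addrA addrC. Qed.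

Lemma psd_stage1 (a : G -> R) (d : R) (C : G -> R) (k : H -> R) :
  0 <= d -> (forall u, C u = d * \sum_w a w * a (u + w)) -> psd k ->
  psd (fun s => \sum_u C u * k (addH (dH u) s)).
Proof.
move=> d0 eC [c [P [c0 ek]]].
exists (d * c), (fun y => \sum_e a e * P (addH y (dH e))); split; first exact: mulr_ge0.
move=> s.
transitivity (d * c * \sum_w \sum_e \sum_y
   ((a w * a e) * (P (addH y (dH w)) * P (addH (addH s y) (dH e))))).
  have pw u : C u * k (addH (dH u) s) = d * c * \sum_w \sum_z
     ((a w * a (u + w)) * (P z * P (addH (addH (dH u) s) z))).
    rewrite eC ek /corrH mulrACA mulr_suml; congr (_ * _); apply: eq_bigr => w _.
    by rewrite mulr_sumr.
  under eq_bigr => u _ do rewrite pw.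
  rewrite -mulr_sumr exchange_big /=; congr (_ * _); apply: eq_bigr => w _.
  rewrite (@reindex_inj _ _ _ _ (fun e => e - w) xpredT _ (@addIr _ (- w))) /=.
  apply: eq_bigr => e _; rewrite subrK.
  rewrite (@reindex_inj _ _ _ _ (fun y => addH y (dH w)) xpredT _ (@addH_injr _ _ (dH w))) /=.
  apply: eq_bigr => y _; congr (_ * (_ * P _)).
  by apply/ffunP => i; rewrite !ffunE argeq.
rewrite /corrH; congr (_ * _); symmetry.
transitivity (\sum_y \sum_w \sum_e
   ((a w * a e) * (P (addH y (dH w)) * P (addH (addH s y) (dH e))))).
  apply: eq_bigr => y _; rewrite mulr_suml; apply: eq_bigr => w _.
  by rewrite mulr_sumr; apply: eq_bigr => e _; rewrite mulrACA.
rewrite exchange_big /=; apply: eq_bigr => w _; by rewrite exchange_big.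
Qed.
End Stage.

Section Stage2.
Variable R : realType.
Variable G : finZmodType.
Variable p : nat.
Local Notation H := {ffun 'I_p -> G}.

Lemma psd_ext (k k' : H -> R) : (forall s, k s = k' s) -> psd k' -> psd k.
Proof. by move=> e [c [P [c0 h]]]; exists c, P; split=> // s; rewrite e h. Qed.

Lemma psd_conv (a b : G -> R) (k : H -> R) : psd k ->
  psd (fun s => \sum_u conv (corr a a) (corr b b) u * k (addH (dH u) s)).
Proof.
move=> hk.
pose k2 := fun t => \sum_u corr b b u * k (addH (dH u) t).
have hk2 : psd k2.
  by apply: (psd_stage1 (a := b) (d := (#|G|%:R)^-1)) => //; rewrite invr_ge0.
have h3 : psd (fun s => \sum_y ((#|G|%:R)^-1 * corr a a y) * k2 (addH (dH y) s)).
  apply: (psd_stage1 (a := a) (d := (#|G|%:R)^-1 * (#|G|%:R)^-1)) => //.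
  by rewrite mulr_ge0 // invr_ge0.
  by move=> u; rewrite /corr /Ex mulrA.
apply: psd_ext h3 => s.
rewrite /conv /Ex.
under eq_bigr => u _ do rewrite mulr_sumr mulr_suml.
rewrite exchange_big /=; apply: eq_bigr => y _.
rewrite /k2 mulr_sumr.
rewrite (@reindex_inj _ _ _ _ (fun u => u + y) xpredT _ (@addIr _ y)) /=.
apply: eq_bigr => u _; rewrite addrK.
have -> : addH (dH (u + y)) s = addH (dH u) (addH (dH y) s).
  by apply/ffunP => i; rewrite !ffunE addrA.
by rewrite !mulrA.
Qed.

Lemma prod_corr (h : 'I_p -> G -> R) (t : H) :
  \prod_i corr (h i) (h i) (t i) =
  ((#|G|%:R)^-1)^+p * corrH (fun z : H => \prod_i h i (z i)) (fun z : H => \prod_i h i (z i)) t.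
Proof.
rewrite /corr /Ex big_split /= prodr_const card_ord; congr (_ * _).
rewrite bigA_distr_bigA /corrH; apply: eq_bigr => z _.
by rewrite -big_split /=; apply: eq_bigr => i _; rewrite ffunE.
Qed.

Lemma psd_prod (h : 'I_p -> G -> R) :
  psd (fun t : H => \prod_i corr (h i) (h i) (t i)).
Proof.
pose c : R := ((#|G|%:R)^-1)^+p.
exists c, (fun z : H => \prod_i h i (z i)); split.
  by rewrite /c exprn_ge0 // invr_ge0.
by move=> t; rewrite prod_corr.
Qed.
End Stage2.

Section Main1.
Variable R : realType.
Variable G : finZmodType.

Lemma core_ineq (a b : G -> R) (f : G -> G -> R) (S : {set G}) (p : nat) (y : G) :
  \sum_u conv (corr a a) (corr b b) u * (\sum_(g in S) corr (f g) (f g) (u + y - g))^+p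
  <= \sum_u conv (corr a a) (corr b b) u * (\sum_(g in S) corr (f g) (f g) u)^+p.
Proof.
have E (F : G -> R) : (\sum_(g in S) F g)^+p =
   \sum_(gg in ffun_on (mem S)) \prod_(i < p) F (gg i).
  by rewrite -[in LHS](card_ord p) -prodr_const bigA_distr_big.
under eq_bigr => u _ do rewrite E mulr_sumr.
under [X in _ <= X]eq_bigr => u _ do rewrite E mulr_sumr.
rewrite exchange_big [X in _ <= X]exchange_big /=.
apply: ler_sum => gg _.
pose k := fun t : {ffun 'I_p -> G} => \prod_i corr (f (gg i)) (f (gg i)) (t i).
pose K := fun s => \sum_u conv (corr a a) (corr b b) u * k (addH (dH u) s).
have hK : psd K by apply: psd_conv; apply: (psd_prod (fun i => f (gg i))).
have := psd_le [ffun i => y - gg i] hK.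
rewrite /K /k; congr (_ <= _).
  apply: eq_bigr => u _; congr (_ * _); apply: eq_bigr => i _.
  by rewrite !ffunE addrA.
apply: eq_bigr => u _; congr (_ * _); apply: eq_bigr => i _.
by rewrite !ffunE addr0.
Qed.
End Main1.

Section Aux2.
Variable R : realType.
Variable G : finZmodType.
Implicit Types (a : G -> R) (X : {set G}) (Y : seq {ffun G -> R[i]}) (t : R).

Lemma cardG_gt0 : (0 < #|G|)%N.
Proof. by apply/card_gt0P; exists 0. Qed.

Lemma cardG_neq0 : (#|G|%:R : R) != 0.
Proof. by rewrite pnatr_eq0 -lt0n cardG_gt0. Qed.

Lemma mu_ge0 X x : 0 <= mu X x :> R.
Proof. by rewrite /mu mulr_ge0 // divr_ge0. Qed.

Lemma Ex_ge0 a : (forall x, 0 <= a x) -> 0 <= Ex a.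
Proof. by move=> h; rewrite /Ex mulr_ge0 ?invr_ge0 // sumr_ge0. Qed.

Lemma corr_ge0 a b x : (forall x, 0 <= a x) -> (forall x, 0 <= b x) -> 0 <= corr a b x.
Proof. by move=> ha hb; apply: Ex_ge0 => y; rewrite mulr_ge0. Qed.

Lemma conv_ge0 a b x : (forall x, 0 <= a x) -> (forall x, 0 <= b x) -> 0 <= conv a b x.
Proof. by move=> ha hb; apply: Ex_ge0 => y; rewrite mulr_ge0. Qed.

Lemma sum_shift a c : \sum_u a (u + c) = \sum_u a u.
Proof. by rewrite -(@reindex_inj _ _ _ _ (fun u => u + c) xpredT a (@addIr _ c)). Qed.

Lemma sum_sub a c : \sum_u a (c - u) = \sum_u a u.
Proof. by rewrite -(@reindex_inj _ _ _ _ (fun u => c - u) xpredT a (@subrI _ c)). Qed.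

Lemma sum_shiftB a c : \sum_u a (u - c) = \sum_u a u.
Proof. exact: sum_shift. Qed.

Lemma sum_mu X : X != set0 -> \sum_x mu X x = #|G|%:R :> R.
Proof.
move=> hX; rewrite /mu -mulr_sumr.
have -> : \sum_x (x \in X)%:R = \sum_(x in X) (1 : R).
  by rewrite [RHS]big_mkcond; apply: eq_bigr => x _; case: (x \in X).
rewrite sumr_const.
rewrite -[_ *+ _]mulr_natr mul1r mulfVK // pnatr_eq0 -lt0n card_gt0 //.
Qed.

Lemma sum_corr a : \sum_u corr a a u = (#|G|%:R)^-1 * (\sum_u a u) ^+ 2.
Proof.
rewrite /corr /Ex -mulr_sumr exchange_big /= expr2 mulr_suml; congr (_ * _).
by apply: eq_bigr => w _; rewrite -mulr_sumr sum_shift.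
Qed.

Lemma sum_conv a b : \sum_u conv a b u = (#|G|%:R)^-1 * (\sum_u a u) * (\sum_u b u).
Proof.
rewrite /conv /Ex -mulr_sumr exchange_big /= -mulrA mulr_suml; congr (_ * _).
by apply: eq_bigr => w _; rewrite -mulr_sumr sum_shiftB.
Qed.

Lemma sum_nu X1 X2 : X1 != set0 -> X2 != set0 ->
  \sum_u conv (corr (mu X1) (mu X1)) (corr (mu X2) (mu X2)) u = #|G|%:R :> R.
Proof.
move=> h1 h2; rewrite sum_conv !sum_corr !sum_mu //.
have := cardG_neq0; set n := (#|G|%:R : R) => hn.
by field.
Qed.

Lemma sum_neq0 (F : G -> R) : \sum_i F i != 0 -> exists i, F i != 0.
Proof.
move=> h; apply/existsP; apply: contraR h => /existsPn h.
by apply/eqP; apply: big1 => i _; apply/eqP; move: (h i); rewrite negbK.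
Qed.

Lemma Ex_neq0 (F : G -> R) : Ex F != 0 -> exists i, F i != 0.
Proof.
move=> h; apply: sum_neq0; apply/eqP => e; move: h; by rewrite /Ex e mulr0 eqxx.
Qed.

Lemma mu_neq0 X x : mu X x != 0 :> R -> x \in X.
Proof. by rewrite /mu; case: (x \in X) => //; rewrite mulr0 eqxx. Qed.

Lemma corr_supp X Y t x : chars Y -> X \subset bohr Y t ->
  corr (mu X) (mu X) x != 0 :> R -> x \in bohr Y (t + t).
Proof.
move=> hc sub /Ex_neq0 [w]; rewrite mulf_eq0 negb_or => /andP [/mu_neq0 h1 /mu_neq0 h2].
have -> : x = (x + w) + (- w) by rewrite addrK.
by apply: bohr_add => //; [exact: (subsetP sub) | apply: bohr_opp => //; exact: (subsetP sub)].
Qed.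

Lemma nu_supp X1 X2 Y t x : chars Y -> X1 \subset bohr Y t -> X2 \subset bohr Y t ->
  conv (corr (mu X1) (mu X1)) (corr (mu X2) (mu X2)) x != 0 :> R ->
  x \in bohr Y ((t + t) + (t + t)).
Proof.
move=> hc s1 s2 /Ex_neq0 [y]; rewrite mulf_eq0 negb_or => /andP [h1 h2].
have -> : x = y + (x - y) by rewrite addrC subrK.
by apply: bohr_add => //; [exact: (corr_supp hc s1) | exact: (corr_supp hc s2)].
Qed.

End Aux2.

Section Main2.
Variable R : realType.
Variable G : finZmodType.

Lemma card_neq0 (X : {set G}) : X != set0 -> (#|X|%:R : R) != 0.
Proof. by move=> h; rewrite pnatr_eq0 -lt0n card_gt0. Qed.

Lemma main_ineq (B D : {set G}) (nu H0 H1 : G -> R) :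
  (forall x, 0 <= nu x) -> (forall x, 0 <= H1 x) -> B != set0 -> D != set0 ->
  (forall x, x \in B -> conv (mu D) nu x = #|G|%:R / #|D|%:R) ->
  (forall y, \sum_u nu u * H1 (u + y) <= \sum_u nu u * H0 u) ->
  Ex (fun x => mu B x * H1 x) <= (#|D|%:R / #|B|%:R) * Ex (fun x => nu x * H0 x).
Proof.
move=> hnu hH1 hB hD hconv hcore.
have nB := card_neq0 hB; have nD := card_neq0 hD.
have nG := cardG_neq0 R G.
set K : R := #|D|%:R / #|B|%:R.
have K0 : 0 <= K by rewrite /K divr_ge0.
have hpt x : mu B x <= K * conv (mu D) nu x.
  case: (boolP (x \in B)) => xB.
    rewrite hconv // /mu xB /K mulr1.
    by rewrite le_eqVlt; apply/orP; left; apply/eqP; field; rewrite nB nD.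
  rewrite /mu (negbTE xB) mulr0; apply: mulr_ge0 => //.
  by apply: conv_ge0 => // y; apply: mu_ge0.
apply: (@le_trans _ _ (Ex (fun x => K * conv (mu D) nu x * H1 x))).
  rewrite /Ex ler_wpM2l ?invr_ge0 //; apply: ler_sum => x _.
  exact: (ler_wpM2r (hH1 x) (hpt x)).
rewrite /Ex /conv /Ex.
set n : R := #|G|%:R.
have eq1 : \sum_x K * (n^-1 * \sum_y mu D y * nu (x - y)) * H1 x =
    K * n^-1 * \sum_y mu D y * \sum_u nu u * H1 (u + y).
  transitivity (\sum_x \sum_y K * n^-1 * mu D y * (nu (x - y) * H1 x)).
    apply: eq_bigr => x _; rewrite mulr_sumr mulr_sumr mulr_suml.
    by apply: eq_bigr => y _; ring.
  rewrite exchange_big mulr_sumr /=; apply: eq_bigr => y _.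
  rewrite [RHS]mulrA mulr_sumr -[LHS](sum_shift _ y).
  by apply: eq_bigr => u _; rewrite addrK.
rewrite eq1.
have hmu : \sum_y mu D y = n by rewrite sum_mu.
apply: (@le_trans _ _ (n^-1 * (K * n^-1 * \sum_y mu D y * \sum_u nu u * H0 u))).
  rewrite ler_wpM2l ?invr_ge0 // ler_wpM2l ?mulr_ge0 ?invr_ge0 //.
  apply: ler_sum => y _; apply: ler_wpM2l; [exact: mu_ge0 | exact: hcore].
rewrite -mulr_suml hmu.
by rewrite le_eqVlt; apply/orP; left; apply/eqP; field.
Qed.
End Main2.

Section Final.
Variable R : realType.
Variable G : finZmodType.

Lemma even_norm (z : R) (p : nat) : ~~ odd p -> `|z| ^+ p = z ^+ p.
Proof.
move=> hodd; rewrite -(odd_double_half p) (negbTE hodd) add0n -muln2 mulnC !exprM.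
by rewrite real_normK // num_real.
Qed.

Lemma corr_shift (h : G -> R) g x : corr h (shift h g) x = corr h h (x - g).
Proof. by rewrite /corr /shift /Ex; congr (_ * _); apply: eq_bigr => y _; rewrite addrAC. Qed.

End Final.

Unset Implicit Arguments.

Theorem lemma4p6 (R : realType) :
  exists c : R, 0 < c /\
  forall (G : finZmodType) (p : nat) (S : {set G}) (f : G -> G -> R)
         (Gam : seq {ffun G -> R[i]}) (phi : R)
         (Gam1 : seq {ffun G -> R[i]}) (phi1 : R)
         (Gam2 : seq {ffun G -> R[i]}) (phi2 : R) (tau : R),
    ~~ odd p -> (2 <= p)%N ->
    bohr_data Gam phi -> regular Gam phi ->
    bohr_data Gam1 phi1 -> regular Gam1 phi1 ->
    bohr_data Gam2 phi2 -> regular Gam2 phi2 ->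
    bohr Gam1 phi1 \subset bohr Gam (tau * phi) ->
    bohr Gam2 phi2 \subset bohr Gam (tau * phi) ->
    tau <= c / (rk Gam)%:R ->
    let B := bohr Gam phi in
    let B1 := bohr Gam1 phi1 in
    let B2 := bohr Gam2 phi2 in
    lpnorm p (conv (corr (mu B1) (mu B1)) (corr (mu B2) (mu B2)))
             (fun x => \sum_(g in S) corr (f g) (f g) x)
    >= 2^-1 * lpnorm p (mu B)
             (fun x => \sum_(g in S) corr (f g) (shift (f g) g) x).
Proof.
exists (400%:R^-1); split; first by rewrite invr_gt0 ltr0n.
move=> G p S f Gam phi Gam1 phi1 Gam2 phi2 tau hodd hp2 bd rg bd1 rg1 bd2 rg2 s1 s2 htau.
cbv zeta.
set B := bohr Gam phi; set B1 := bohr Gam1 phi1; set B2 := bohr Gam2 phi2.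
case: bd => hne _ hch /andP [phi0 _].
case: bd1 => _ _ hch1 /andP [phi10 _].
case: bd2 => _ _ hch2 /andP [phi20 _].
set t := tau * phi.
have B1_0 : 0 \in B1 by apply: bohr0.
have B2_0 : 0 \in B2 by apply: bohr0.
have t0 : 0 <= t by apply: (bohr0_ge0 hne); exact: (subsetP s1).
have B_0 : 0 \in B by apply: bohr0.
have hB : B != set0 by apply/set0Pn; exists 0.
have hB1 : B1 != set0 by apply/set0Pn; exists 0.
have hB2 : B2 != set0 by apply/set0Pn; exists 0.
set nu := conv (corr (mu B1) (mu B1)) (corr (mu B2) (mu B2)).
set D := bohr Gam ((1 + 4%:R * tau) * phi).
have eD : (1 + 4%:R * tau) * phi = phi + ((t + t) + (t + t)).
  by rewrite /t; ring.
have D_0 : 0 \in D by apply: bohr0 => //; rewrite eD; lra.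
have hD : D != set0 by apply/set0Pn; exists 0.
have nu0 x : 0 <= nu x.
  by apply: conv_ge0 => y; apply: corr_ge0 => z; apply: mu_ge0.
have hsupp z : nu z != 0 -> z \in bohr Gam ((t + t) + (t + t)).
  exact: nu_supp.
have nG := cardG_neq0 R G.
have nD := card_neq0 R hD.
have hconv x : x \in B -> conv (mu D) nu x = #|G|%:R / #|D|%:R.
  move=> xB; rewrite /conv /Ex.
  have e y : mu D y * nu (x - y) = #|G|%:R / #|D|%:R * nu (x - y).
    case: (eqVneq (nu (x - y)) 0) => [->|nz]; first by rewrite !mulr0.
    have yD : y \in D.
      have -> : y = x + - (x - y) by rewrite opprB addrC subrK.
      rewrite /D eD; apply: bohr_add => //; apply: bohr_opp => //; exact: hsupp.
    by rewrite /mu yD mulr1.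
  under eq_bigr => y _ do rewrite e.
  rewrite -mulr_sumr (@sum_sub _ _ nu x) sum_nu //.
  by field; rewrite nD.
set T0 := fun x => \sum_(g in S) corr (f g) (f g) x.
set T := fun x => \sum_(g in S) corr (f g) (shift (f g) g) x.
have hcore y : \sum_u nu u * `|T (u + y)| ^+ p <= \sum_u nu u * `|T0 u| ^+ p.
  under eq_bigr => u _ do rewrite even_norm // /T.
  under [X in _ <= X]eq_bigr => u _ do rewrite even_norm // /T0.
  under eq_bigr => u _ do under eq_bigr => g _ do rewrite corr_shift.
  exact: core_ineq.
have hmain := main_ineq (H0 := fun x => `|T0 x| ^+ p) (H1 := fun x => `|T x| ^+ p)
   nu0 (fun x => exprn_ge0 p (normr_ge0 (T x))) hB hD hconv hcore.
have hK : (#|D|%:R / #|B|%:R : R) <= 2.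
  have nB := card_neq0 R hB.
  case: (eqVneq phi 0) => [ph0|phn0].
    have eDB : D = B by rewrite /D /B ph0 mulr0.
    rewrite eDB divff //; lra.
  have phpos : 0 < phi by rewrite lt_def phn0 phi0.
  have tau0 : 0 <= tau by rewrite -(pmulr_lge0 _ phpos).
  have rpos : 0 < (rk Gam)%:R :> R.
    by rewrite ltr0n /rk; case: (Gam) hne.
  move: htau; rewrite ler_pdivlMr // => htau.
  have k0 : 0 <= 4%:R * tau by rewrite mulr_ge0.
  have kle : 4%:R * tau <= (100 * (rk Gam)%:R)^-1.
    rewrite -div1r ler_pdivlMr ?mulr_gt0 //; nra.
  have [hreg _] := rg _ k0 kle.
  rewrite ler_pdivrMr; last by rewrite ltr0n card_gt0.
  apply: (le_trans hreg); rewrite ler_wpM2r //; nra.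
rewrite /lpnorm.
set Y := Ex (fun x => mu B x * `|T x| ^+ p).
set X := Ex (fun x => nu x * `|T0 x| ^+ p).
have X0 : 0 <= X by apply: Ex_ge0 => x; rewrite mulr_ge0 ?exprn_ge0.
have Y0 : 0 <= Y by apply: Ex_ge0 => x; rewrite mulr_ge0 ?mu_ge0 ?exprn_ge0.
have YX : Y <= 2 * X := le_trans hmain (ler_wpM2r X0 hK).
set r : R := (p%:R)^-1.
have r0 : 0 <= r by rewrite /r invr_ge0.
have r1 : r <= 1.
  by rewrite /r invf_le1 ?ltr0n ?(leq_trans _ hp2) // ler1n (leq_trans _ hp2).
have h1 : Y `^ r <= (2 * X) `^ r.
  by apply: ge0_ler_powR => //; rewrite nnegrE // mulr_ge0.
rewrite powRM // in h1.
have h2 : 2 `^ r <= 2 :> R by apply: ler1_powR => //; lra.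
have h3 : Y `^ r <= 2 * X `^ r.
  by apply: (le_trans h1); rewrite ler_wpM2r // powR_ge0.
lra.
Qed.
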